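(* Let $p$ be an odd prime, $n\ge1$, $G=\mu_{p^n}$, $\alpha$ an integer whose class generates $(\mathbb{Z}/p^n\mathbb{Z})^\times$, and $\mathcal{P}$ a unital partition of $G$. Let $0\le k\le n$, $A\in\mathcal{P}_k$, $y\in A\cap B_k$, and let $u_k$ be the smallest positive integer with $y^{\alpha^{u_k}}\in A$. Then $u_k$ divides $\phi(p^{n-k})$.
   Context: A unital partition of a finite commutative group $G$ is a partition $G=\{1\}\sqcup A_0\sqcup\dots\sqcup A_s$ such that, with $a_i=\sum_{x\in A_i}x\in\mathbb{Z}[G]$, the $\mathbb{Z}$-span of $1$ and the $a_i$ is closed under multiplication in $\mathbb{Z}[G]$. $B_k=\{x^{p^k}\mid x\text{ a generator of }G\}$, $\mathcal{P}_k=\{A\in\mathcal{P}\mid A\cap B_k\neq\emptyset\}$, and $\phi$ is Euler's totient function. *)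

(* Defs.v *)
From HB Require Import structures.
From mathcomp Require Import all_boot all_order all_algebra all_fingroup all_solvable.
Set Implicit Arguments. Unset Strict Implicit. Unset Printing Implicit Defensive.
Import GRing.Theory Num.Theory.

Section GroupRing.
Variable gT : finGroupType.
Variable G : {group gT}.

(* Elements of Z[G] are represented as functions gT -> int (supported on G). *)
Definition grmul (f g : gT -> int) : gT -> int :=
  fun z => (\sum_(x in G) f x * g ((x^-1)%g * z)%g)%R.

Definition grsum (A : {set gT}) : gT -> int := fun z => ((z \in A) : int).

Definition grone : gT -> int := fun z => ((z == 1%g) : int).

Definition in_span (P : {set {set gT}}) (f : gT -> int) : Prop :=
  exists (c0 : int) (c : {set gT} -> int),
    forall z : gT, f z = (c0 * grone z + \sum_(A in P) c A * grsum A z)%R.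

Definition unital_partition (P : {set {set gT}}) : Prop :=
  partition P (G :\ 1%g) /\
  forall f g, in_span P f -> in_span P g -> in_span P (grmul f g).

Definition Bset (p k : nat) : {set gT} :=
  [set (x ^+ (p ^ k))%g | x in G & generator G x].

Definition Pk (P : {set {set gT}}) (p k : nat) : {set {set gT}} :=
  [set A in P | A :&: Bset p k != set0].

End GroupRing.

Definition zpow (gT : finGroupType) (N : nat) (y : gT) (m : int) : gT :=
  (y ^+ `|(m %% (N%:Z))%Z|%N)%g.

Definition generates_units (N : nat) (alpha : int) : Prop :=
  coprimez alpha N%:Z /\
  forall b : int, coprimez b N%:Z -> exists j : nat, (b = alpha ^+ j %[mod N%:Z])%Z.

(* Main.v *)
Require Import Defs.
From HB Require Import structures.
From mathcomp Require Import all_boot all_order all_algebra all_fingroup all_solvable.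
Set Implicit Arguments. Unset Strict Implicit. Unset Printing Implicit Defensive.
Import GRing.Theory.

Section Count.
Variables (gT : finGroupType) (X : {set gT}).

Definition tup j z := [set t : {ffun 'I_j -> gT} |
   [forall i, t i \in X] && ((\prod_(i < j) t i)%g == z)].

Definition consf j (u : gT * {ffun 'I_j -> gT}) : {ffun 'I_j.+1 -> gT} :=
  [ffun i => if unlift ord0 i is Some i' then u.2 i' else u.1].

Lemma consf_in j x t z :
  (consf (x, t) \in tup j.+1 z) = (x \in X) && (t \in tup j (x^-1 * z)%g).
Proof.
rewrite !inE big_ord_recl !ffunE unlift_none /=.
have -> : (\prod_(i < j) consf (x, t) (lift ord0 i))%g = (\prod_(i < j) t i)%g.
  by apply: eq_bigr => i _; rewrite ffunE liftK.
have -> : ((x * \prod_(i < j) t i)%g == z) = ((\prod_(i < j) t i)%g == (x^-1 * z)%g).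
  apply/eqP/eqP => [<-|->]; [by rewrite mulKg | by rewrite mulKVg].
case: (boolP (x \in X)) => xX /=.
  congr (_ && _); apply/forallP/forallP => H i.
    by have := H (lift ord0 i); rewrite ffunE liftK.
  rewrite ffunE; case: unliftP => [i' _|_]; [exact: H | exact: xX].
apply/negbTE; apply/negP => /andP[/forallP H _].
by have := H ord0; rewrite ffunE unlift_none (negbTE xX).
Qed.

Lemma card_tupS j z : #|tup j.+1 z| = \sum_(x in X) #|tup j (x^-1 * z)%g|.
Proof.
pose unc (t : {ffun 'I_j.+1 -> gT}) := (t ord0, [ffun i => t (lift ord0 i)]).
have consK : cancel unc (@consf j).
  move=> t; apply/ffunP=> i; rewrite ffunE /=.
  by case: unliftP => [i' ->|->]; rewrite ?ffunE.
have uncK : cancel (@consf j) unc.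
  move=> [x t]; rewrite /unc ffunE unlift_none; congr (_, _).
  by apply/ffunP=> i; rewrite !ffunE liftK.
rewrite -sum1_card (reindex (@consf j)) /=; last first.
  by exists unc => u _; [apply: uncK | apply: consK].
transitivity (\sum_(x : gT) \sum_(t : {ffun 'I_j -> gT})
                 (if consf (x, t) \in tup j.+1 z then 1 else 0)).
  by rewrite pair_bigA big_mkcond.
rewrite [RHS]big_mkcond; apply: eq_bigr => x _.
under eq_bigr do rewrite consf_in.
case: (x \in X) => /=; last by rewrite big1.
by rewrite -big_mkcond sum1_card.
Qed.

Lemma card_tup0 z : #|tup 0 z| = (z == 1%g).
Proof.
have -> : tup 0 z = if z == 1%g then setT else set0.
  apply/setP=> t; rewrite !inE big_ord0.
  have -> : [forall i, t i \in X] = true by apply/forallP => -[].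
  case: (z =P 1%g) => [->|/eqP H]; first by rewrite !eqxx inE.
  by rewrite eq_sym (negbTE H) inE.
case: (z == 1%g); last by rewrite cards0.
by rewrite cardsT card_ffun card_ord expn0.
Qed.
End Count.

Section Pw.
Variables (gT : finGroupType) (G : {group gT}) (X : {set gT}).
Hypothesis sXG : X \subset G.

Fixpoint Pw j : gT -> int :=
  if j is j'.+1 then grmul G (grsum X) (Pw j') else @grone gT.

Lemma Pw_card j z : Pw j z = Posz #|tup X j z|.
Proof.
elim: j z => [|j IH] z /=; first by rewrite card_tup0.
rewrite card_tupS /grmul; under [LHS]eq_bigr do rewrite IH.
rewrite -natz natr_sum [RHS]big_mkcond [LHS]big_mkcond /=.
apply: eq_bigr => x _; rewrite /grsum natz.
case: (boolP (x \in X)) => xX.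
  by rewrite (subsetP sXG _ xX) mul1r.
by case: (x \in G); rewrite // mul0r.
Qed.
End Pw.
Section Rot.
Variables (T : Type) (q : nat).
Definition rotf (t : {ffun 'I_q.+1 -> T}) (s : 'I_q.+1) : {ffun 'I_q.+1 -> T} :=
  [ffun i => t (i + s)%R].
Lemma rotf1 : rotf^~ 1%g =1 id.
Proof. move=> t; apply/ffunP=> i; rewrite ffunE.
have -> : (i + (1%g : 'I_q.+1))%R = i. by rewrite addr0.
by []. Qed.
Lemma rotfM : forall x, act_morph rotf x.
Proof. move=> t a b; apply/ffunP=> i; rewrite !ffunE.
have E : ((a * b)%g : 'I_q.+1) = (a + b)%R := erefl.
by rewrite E -addrA [(b + a)%R]addrC. Qed.
Definition rotact := TotalAction rotf1 rotfM.
End Rot.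

Section Fix.
Variables (gT : finGroupType) (G : {group gT}) (r : nat).
Hypothesis abG : abelian G.

Lemma prod_rot1 (t : {ffun 'I_r.+2 -> gT}) : (forall i, t i \in G) ->
  (\prod_(i < r.+2) t (i + 1)%R)%g = (\prod_(i < r.+2) t i)%g.
Proof.
move=> tG.
rewrite [LHS]big_ord_recr [RHS]big_ord_recl /=.
have -> : (ord_max + 1)%R = ord0 :> 'I_r.+2.
  by apply: val_inj => /=; rewrite (modn_small (_ : 1 < r.+2)) // addn1 modnn.
rewrite (eq_bigr (fun i => t (lift ord0 i))); last first.
  move=> i _; congr (t _); apply: val_inj => /=.
  rewrite (@modn_small 1) // addn1 modn_small //; exact: ltn_ord i.
have PG : (\prod_(i < r.+1) t (lift ord0 i))%g \in G.
  by apply: group_prod => i _.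
have := subsetP abG _ (tG ord0).
move/centP => H.
by have := H _ PG.
Qed.

Lemma prod_rot (t : {ffun 'I_r.+2 -> gT}) (s : 'I_r.+2) : (forall i, t i \in G) ->
  (\prod_(i < r.+2) t (i + s)%R)%g = (\prod_(i < r.+2) t i)%g.
Proof.
move=> tG; rewrite -[s]valZpK -Zp_nat.
elim: (val s) t tG => [|k IH] t tG.
  by apply: eq_bigr => i _; rewrite addr0.
pose t' := [ffun i => t (i + k%:R)%R].
have t'G : forall i, t' i \in G by move=> i; rewrite ffunE.
rewrite -(IH t tG).
have -> : (\prod_(i < r.+2) t (i + k%:R)%R)%g = (\prod_(i < r.+2) t' i)%g.
  by apply: eq_bigr => i _; rewrite ffunE.
rewrite -(prod_rot1 t'G); apply: eq_bigr => i _.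
by rewrite ffunE -addrA -mulrS.
Qed.
End Fix.
Section Mod.
Variables (gT : finGroupType) (G : {group gT}) (X : {set gT}) (r : nat).
Hypotheses (abG : abelian G) (sXG : X \subset G) (pr : prime r.+2).

Lemma tup_mod z : #|tup X r.+2 z| = #|[set x in X | (x ^+ r.+2)%g == z]| %[mod r.+2].
Proof.
have acts : [acts [set: 'I_r.+2], on tup X r.+2 z | rotact gT r.+1].
  apply/actsP => a _ t /=; rewrite !inE.
  have E : [forall i, rotf t a i \in X] = [forall i, t i \in X].
    apply/forallP/forallP => H i.
      by have := H (i - a)%R; rewrite ffunE subrK.
    by rewrite ffunE; exact: H.
  rewrite E; case: (boolP [forall i, t i \in X]) => //= /forallP H.
  have tG i : t i \in G by exact: subsetP sXG _ (H i).
  rewrite -(prod_rot abG a tG); congr (_ == _); apply: eq_bigr => i _; rewrite ffunE.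
  by [].
rewrite (pgroup_fix_mod _ acts); last by rewrite /pgroup cardsT card_ord pnat_id.
congr (_ %% _).
pose c := fun x : gT => [ffun _ : 'I_r.+2 => x].
have pc x : (\prod_(i < r.+2) c x i)%g = (x ^+ r.+2)%g.
  by under eq_bigr do rewrite ffunE; rewrite prodg_const card_ord.
have -> : ('Fix_(tup X r.+2 z | rotact gT r.+1)([set: 'I_r.+2]))%g
          = c @: [set x in X | (x ^+ r.+2)%g == z].
  apply/setP => t; rewrite inE.
  apply/andP/imsetP.
    case=> tS /afixP fixt.
    have tc : t = c (t ord0).
      apply/ffunP => i; rewrite ffunE.
      have := fixt i (in_setT i); move/(congr1 (fun f : {ffun 'I_r.+2 -> gT} => f ord0)).
      by rewrite /= ffunE add0r.
    exists (t ord0) => //.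
    move: tS; rewrite !inE => /andP[/forallP H /eqP <-].
    by rewrite H /= -pc -tc.
  case=> x; rewrite inE => /andP[xX /eqP xz] ->; split.
    by rewrite inE pc xz eqxx andbT; apply/forallP => i; rewrite ffunE.
  by apply/afixP => a _; apply/ffunP => i; rewrite /= !ffunE.
rewrite card_imset //.
by move=> x y /(congr1 (fun f : {ffun 'I_r.+2 -> gT} => f ord0)); rewrite !ffunE.
Qed.
End Mod.
Section Part.
Variables (gT : finGroupType) (G : {group gT}) (P : {set {set gT}}).
Hypothesis partP : partition P (G :\ 1%g).

Lemma block_sub B : B \in P -> B \subset G :\ 1%g.
Proof.
case/and3P: partP => /eqP <- _ _ BP; exact: bigcup_sup.
Qed.

Lemma block_uniq A B z : A \in P -> B \in P -> z \in A -> z \in B -> A = B.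
Proof.
case/and3P: partP => _ /trivIsetP tI _ AP BP zA zB.
apply/eqP; apply/negPn/negP => nAB.
by have := tI _ _ AP BP nAB; move/disjointFr => /(_ _ zA); rewrite zB.
Qed.

Lemma block_ex z : z \in G :\ 1%g -> exists2 B, B \in P & z \in B.
Proof.
case/and3P: partP => /eqP cP _ _; rewrite -cP => /bigcupP[B BP zB].
by exists B.
Qed.

Lemma span_val f B z : in_span P f -> B \in P -> z \in B ->
  exists c : {set gT} -> int, forall w, w \in B -> f w = c B.
Proof.
case=> c0 [c fE] BP _; exists c => w wB.
rewrite fE (bigD1 B) //= big1 => [|A /andP[AP nAB]].
  have : w \in G :\ 1%g by exact: subsetP (block_sub BP) _ wB.
  rewrite !inE /grone /grsum wB => /andP[/negbTE -> _].
  by rewrite mulr0 add0r mulr1 addr0.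
rewrite /grsum; case: (boolP (w \in A)) => wA; last by rewrite mulr0.
by rewrite (block_uniq AP BP wA wB) eqxx in nAB.
Qed.

Lemma span_const f B z w : in_span P f -> B \in P -> z \in B -> w \in B -> f z = f w.
Proof.
move=> fS BP zB wB; have [c Hc] := span_val fS BP zB.
by rewrite !Hc.
Qed.

Definition Ucl (Y : {set gT}) := forall B, B \in P -> forall z w,
  z \in B -> w \in B -> (z \in Y) = (w \in Y).

Lemma span_sum (Y : {set gT}) : Y \subset G :\ 1%g -> Ucl Y -> in_span P (grsum Y).
Proof.
move=> sY UY; exists 0%R, (fun B : {set gT} => Posz (B \subset Y)) => z.
rewrite mul0r add0r.
case: (boolP (z \in G :\ 1%g)) => zG.
  have [B0 B0P zB0] := block_ex zG.
  rewrite (bigD1 B0) //= big1 => [|A /andP[AP nAB]].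
    rewrite addr0 /grsum zB0 mulr1; congr (Posz (nat_of_bool _)).
    apply/idP/idP => [zY|/subsetP]; last exact.
    by apply/subsetP => w wB; rewrite -(UY _ B0P z w zB0 wB).
  rewrite /grsum; case: (boolP (z \in A)) => zA; last by rewrite mulr0.
  by rewrite (block_uniq AP B0P zA zB0) eqxx in nAB.
rewrite /grsum big1 => [|A AP].
  by case: (boolP (z \in Y)) => // zY; rewrite (subsetP sY _ zY) in zG.
case: (boolP (z \in A)) => zA; last by rewrite mulr0.
by rewrite (subsetP (block_sub AP) _ zA) in zG.
Qed.

Hypothesis closed : forall f g, in_span P f -> in_span P g -> in_span P (grmul G f g).

Lemma span_Pw (Y : {set gT}) j : Y \subset G :\ 1%g -> Ucl Y -> in_span P (Pw G Y j).
Proof.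
move=> sY UY; elim: j => [|j IH] /=.
  by exists 1%R, (fun _ => 0%R) => z; rewrite mul1r big1 ?addr0.
exact: closed (span_sum sY UY) IH.
Qed.

Hypothesis abG : abelian G.

Definition Img (m : nat) (Y : {set gT}) := [set (x ^+ m)%g | x in Y].

Lemma exp_inj m x y : coprime #|G| m -> x \in G -> y \in G ->
  (x ^+ m)%g = (y ^+ m)%g -> x = y.
Proof.
by move=> cm xG yG E; rewrite -(expgK cm xG) E (expgK cm yG).
Qed.

Lemma card_root (Y : {set gT}) q z : Y \subset G -> coprime #|G| q ->
  #|[set x in Y | (x ^+ q)%g == z]| = (z \in Img q Y).
Proof.
move=> sY cq; case: (boolP (z \in Img q Y)) => zI.
  case/imsetP: zI => x0 x0Y ->.
  have -> : [set x in Y | (x ^+ q)%g == (x0 ^+ q)%g] = [set x0].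
    apply/setP => x; rewrite !inE; apply/andP/eqP => [[xY /eqP E]|->].
      exact: exp_inj cq (subsetP sY _ xY) (subsetP sY _ x0Y) E.
    by rewrite x0Y eqxx.
  by rewrite cards1.
apply/eqP; rewrite cards_eq0; apply/eqP/setP => x; rewrite !inE.
apply/negbTE/negP => /andP[xY /eqP E]; move: zI.
rewrite -E /Img => /negP; apply; apply/imsetP; by exists x.
Qed.

Lemma img_prime (Y : {set gT}) q : prime q -> coprime #|G| q ->
  Y \subset G :\ 1%g -> Ucl Y -> Ucl (Img q Y).
Proof.
move=> pq cq sY UY B BP z w zB wB.
have sYG : Y \subset G by apply: subset_trans sY (subsetDl _ _).
have E : Pw G Y q z = Pw G Y q w := span_const (span_Pw q sY UY) BP zB wB.
rewrite !Pw_card // in E; case: E => E.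
have q1 := prime_gt1 pq.
case: q pq cq q1 E => [|[|r]] // pq cq q1 E.
have Hz := tup_mod abG sYG pq z; have Hw := tup_mod abG sYG pq w.
rewrite E Hw !card_root // !modn_small ?ltn_b // in Hz.
  by case: (z \in _) (w \in _) Hz => -[].
all: by case: (_ \in _).
Qed.

Lemma img_sub m (Y : {set gT}) : coprime #|G| m -> Y \subset G :\ 1%g ->
  Img m Y \subset G :\ 1%g.
Proof.
move=> cm sY; apply/subsetP => z /imsetP[x xY ->].
have := subsetP sY _ xY; rewrite !inE => /andP[nx1 xG].
rewrite groupX // andbT; apply/negP => /eqP e.
have : x = 1%g by apply: (exp_inj cm xG (group1 G)); rewrite e expg1n.
by move/eqP; rewrite (negbTE nx1).
Qed.

Lemma ImgM a b (Y : {set gT}) : Img (a * b) Y = Img b (Img a Y).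
Proof.
apply/setP => z; apply/imsetP/imsetP => [[x xY ->]|[w /imsetP[x xY ->] ->]].
  by exists (x ^+ a)%g; [apply/imsetP; exists x | rewrite expgM].
by exists x => //; rewrite expgM.
Qed.

Lemma Img1 (Y : {set gT}) : Img 1 Y = Y.
Proof.
apply/setP => z; apply/imsetP/idP => [[x xY ->]|zY]; first by rewrite expg1.
by exists z; rewrite ?expg1.
Qed.

Lemma img_all m : 0 < m -> coprime #|G| m -> forall Y : {set gT},
  Y \subset G :\ 1%g -> Ucl Y -> Ucl (Img m Y).
Proof.
elim/ltn_ind: m => m IH m0 cm Y sY UY.
case: (ltngtP m 1) => [|m1|->]; last by rewrite Img1.
  by rewrite ltnS leqn0 => /eqP m00; rewrite m00 in m0.
have pp := pdiv_prime m1; have pd := pdiv_dvd m.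
set p := pdiv m in pp pd.
have p1 := prime_gt1 pp.
have mE : m = (m %/ p) * p by rewrite divnK.
have cp : coprime #|G| p by apply: coprime_dvdr pd cm.
have cm' : coprime #|G| (m %/ p).
  by apply: coprime_dvdr cm; apply/dvdnP; exists p; rewrite mulnC -mE.
have m'0 : 0 < m %/ p by rewrite divn_gt0 ?(ltnW p1) // dvdn_leq.
have m'm : m %/ p < m by rewrite ltn_Pdiv.
rewrite mE ImgM; apply: img_prime => //.
  exact: img_sub.
exact: IH.
Qed.
End Part.
Theorem mainTheorem6 (gT : finGroupType) (G : {group gT}) (p n : nat)
  (alpha : int) (P : {set {set gT}}) (k : nat) (A : {set gT}) (y : gT) (u : nat) :
  prime p -> odd p -> (1 <= n)%N ->
  cyclic G -> #|G| = (p ^ n)%N ->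
  generates_units (p ^ n) alpha ->
  unital_partition G P ->
  (k <= n)%N ->
  A \in Pk G P p k ->
  y \in A :&: Bset G p k ->
  (0 < u)%N ->
  zpow (p ^ n) y (alpha ^+ u)%R \in A ->
  (forall v : nat, (0 < v < u)%N -> zpow (p ^ n) y (alpha ^+ v)%R \notin A) ->
  (u %| totient (p ^ (n - k)))%N.
Proof.
move=> pp _ n1 cG cardG [cop _] [partP closed] kn APk yAB u0 yuA ymin.
have abG := cyclic_abelian cG.
have AP : A \in P by move: APk; rewrite inE => /andP[].
case/setIP: yAB => yA yB.
have yG : y \in G by have := subsetP (block_sub partP AP) _ yA; rewrite !inE => /andP[].
case/imsetP: yB => x; rewrite inE => /andP[xG _] yE.
set N := (p ^ n)%N.
have N1 : (1 < N)%N by rewrite /N -[1%N](expn0 p) ltn_exp2l // prime_gt1.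
set a := `|(alpha %% (Posz N))%Z|%N.
have aE : (alpha %% (Posz N))%Z = Posz a.
  by rewrite /a gez0_abs // modz_ge0 // -lt0n ltnW.
have yN : (y ^+ N)%g = 1%g by rewrite /N -cardG expg_cardG.
have zp v : zpow N y (alpha ^+ v)%R = (y ^+ (a ^ v))%g.
  rewrite /zpow -modzXm aE.
  have -> : (Posz a ^+ v)%R = Posz (a ^ v) by rewrite -!natz natrX.
  rewrite modz_nat /=.
  exact: expg_mod.
have caN : coprime a N.
  by move: cop; rewrite /coprimez -gcdz_modl aE.
have a0 : (0 < a)%N.
  rewrite lt0n; apply/negP => /eqP a00; move: caN.
  by rewrite a00 /coprime gcd0n => /eqP N1e; rewrite N1e in N1.
have cGm v : coprime #|G| (a ^ v) by rewrite cardG coprime_sym coprimeXl.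
have m0 v : (0 < a ^ v)%N by rewrite expn_gt0 a0.
set M := (p ^ (n - k))%N.
have yM : (y ^+ M)%g = 1%g.
  by rewrite yE -expgM -expnD subnKC // -cardG expg_cardG.
set D := totient M.
have caM : coprime a M.
  by rewrite /M coprimeXr // -(coprime_pexpr _ _ n1).
have yD : (y ^+ (a ^ D))%g = y.
  by rewrite -(expg_mod _ yM) Euler_exp_totient // (expg_mod _ yM) expg1.
set m := (a ^ u)%N.
have UA : Ucl P A.
  move=> B BP z w zB wB.
  apply/idP/idP => H.
    by rewrite (block_uniq partP AP BP H zB).
  by rewrite (block_uniq partP AP BP H wB).
have U := img_all partP closed abG (m0 u) (cGm u) (block_sub partP AP) UA.
have ymA : (y ^+ m)%g \in A by rewrite -zp.
have sAG : A \subset G.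
  by apply: subset_trans (block_sub partP AP) (subsetDl _ _).
have AsubI : A \subset Img m A.
  apply/subsetP => w wA.
  rewrite -(U A AP _ _ ymA wA).
  by apply/imsetP; exists y.
have IE : Img m A = A.
  apply/eqP; rewrite eq_sym eqEcard AsubI card_in_imset ?leqnn // => x1 x2 x1A x2A.
  exact: exp_inj (cGm u) (subsetP sAG _ x1A) (subsetP sAG _ x2A).
have back j w : w \in G -> (w ^+ (m ^ j))%g \in A -> w \in A.
  elim: j w => [|j IH] w wG; first by rewrite expn0 expg1.
  rewrite expnS expgM => /(IH _ (groupX _ wG)).
  rewrite -{1}IE => /imsetP[x' x'A E].
  by rewrite (exp_inj (cGm u) wG (subsetP sAG _ x'A) E).
rewrite /dvdn; apply/negPn/negP => r0.
have rpos : (0 < D %% u)%N by rewrite lt0n.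
have := ymin (D %% u); rewrite rpos ltn_pmod // zp => /(_ isT) /negP; apply.
apply: (back (D %/ u)); first exact: groupX.
rewrite -expgM /m -expnM -expnD addnC mulnC -divn_eq yD //.
Qed.
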